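(* Let ancillae $A_1,\dots,A_n$ consecutively measure a $d$-dimensional prepared quantum system $Q$. Let $S(Q:A_n)$ be the mutual entropy of $Q$ and $A_n$ in the unamplified state, and let $S(Q:D_n)$ be the mutual entropy of $Q$ and $D_n$ after the measurements have been amplified by detectors $D_1,\dots,D_n$. Then $$S(Q:D_n)\le S(Q:A_n).$$
   Context: $Q$ is $d$-dimensional, initially in $|Q\rangle=\sum_{x_1}\alpha^{(1)}_{x_1}|\widetilde{x}_1\rangle$. Ancilla $A_i$ ($d$-dimensional, basis $\{|x\rangle\}$, initially $|0\rangle$) measures $Q$ in the orthonormal basis $\{|\widetilde{x}_i\rangle\}$ via the unitary $\sum_x|\widetilde{x}_i\rangle\langle\widetilde{x}_i|\otimes U_x$, $U_x|0\rangle=|x\rangle$; with $U^{(i)}_{x_{i-1}x_i}=\langle\widetilde{x}_i|\widetilde{x}_{i-1}\rangle$, the unamplified state after $n$ consecutive measurements is $\sum_{x_1,\dots,x_n}\alpha^{(1)}_{x_1}U^{(2)}_{x_1x_2}\cdots U^{(n)}_{x_{n-1}x_n}|\widetilde{x}_n\rangle_Q|x_1\rangle_{A_1}\cdots|x_n\rangle_{A_n}$. Amplification: each detector $D_i$ (initially $|0\rangle$) copies $A_i$, $|x\rangle_{A_i}|0\rangle_{D_i}\mapsto|x\rangle_{A_i}|x\rangle_{D_i}$. Entropies are von Neumann (log base $d$) of reduced states; $S(X:Y)=S(X)+S(Y)-S(XY)$. *)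

(* Defs.v *)
From HB Require Import structures.
From mathcomp Require Import all_boot all_order all_algebra.
From mathcomp Require Import reals exp.
From mathcomp Require Import complex.

Set Implicit Arguments.
Unset Strict Implicit.
Unset Printing Implicit Defensive.

Import Order.TTheory GRing.Theory Num.Theory.
Local Open Scope ring_scope.

Section QuantumDefs.
Variable R : realType.
Local Notation C := R[i].

Definition spectrum (N : nat) (M : 'M[C]_N) : seq C :=
  sval (closed_field_poly_normal (char_poly M)).

(** Von Neumann entropy, logarithm in base [b]:
    S(rho) = - sum_{lambda eigenvalue} lambda log_b lambda
    (eigenvalues of density matrices are real; we take their real part). *)
Definition vN_entropy (b : nat) (N : nat) (M : 'M[C]_N) : R :=
  - \sum_(z <- spectrum M) (complex.Re z * ln (complex.Re z)) / ln (b%:R).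

(** Composite system of [k] subsystems, each [d]-dimensional, with
    computational basis labelled by configurations [{ffun 'I_k -> 'I_d}].
    A (pure) state is an amplitude function on configurations. *)
Definition config (k d : nat) := {ffun 'I_k -> 'I_d}.

Definition restr (k d m : nat) (p : m.-tuple 'I_k) (a : config k d) : config m d :=
  [ffun j => a (tnth p j)].

(** Reduced density matrix (partial trace over the complement of the
    subsystems listed in [p], assumed distinct) of the pure state [psi]. *)
Definition reduced (k d m : nat) (psi : config k d -> C) (p : m.-tuple 'I_k)
  : 'M[C]_(#|{: config m d}|) :=
  \matrix_(i, j)
    \sum_(a : config k d | restr p a == enum_val i)
      \sum_(b : config k d | (restr p b == enum_val j) &&
                             [forall l, (l \notin p) ==> (a l == b l)])
        psi a * (psi b)^*.

Definition ent (k d m : nat) (psi : config k d -> C) (p : m.-tuple 'I_k) : R :=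
  vN_entropy d (reduced psi p).

Definition mutual_entropy (k d : nat) (psi : config k d -> C) (x y : 'I_k) : R :=
  ent psi [tuple x] + ent psi [tuple y] - ent psi [tuple x; y].

(** A square matrix is unitary: B^* B = 1. The columns of such a [B]
    form an orthonormal basis { |x~> = B(., x) } of C^d. *)
Definition unitary (d : nat) (B : 'M[C]_d) : Prop :=
  (map_mx conjc B)^T *m B = 1%:M.

(** Layout: position 0 is Q, position i (1 <= i <= n)
    is A_i. [B i] (i = 1..n) is the unitary whose columns are the orthonormal
    basis |x~_i> = B i (.,x) in which A_i measures Q; [q] is the initial state
    of Q in the computational basis of C^d. With
      alpha_x          = <x~_1|Q>          = sum_j conj(B 1 j x) q_j,
      U^(i)_{x y}      = <x~_i|x~_(i-1)>   (x = x_(i-1), y = x_i),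
    the amplitude of |q>_Q |x_1>..|x_n> is
      alpha_{x_1} U^(2)_{x_1 x_2} ... U^(n)_{x_(n-1) x_n} <q|x~_(x_n)>,
    the Q-factor |x~_(x_n)> being expanded in the computational basis. *)
Definition unamplified (d n : nat) (B : nat -> 'M[C]_d) (q : 'cV[C]_d)
  (c : config n.+1 d) : C :=
  let x := fun i : nat => c (inord i) in
  (\sum_(j < d) (B 1%N j (x 1%N))^* * q j 0) *
  (\prod_(2 <= i < n.+1) \sum_(j < d) (B i j (x i))^* * B i.-1 j (x i.-1)) *
  B n (x 0%N) (x n).

(** Amplified state: detector D_i (position n + i, 1 <= i <= n) copies A_i,
    |x>_{A_i}|0>_{D_i} |-> |x>_{A_i}|x>_{D_i}. *)
Definition amplified (d n : nat) (B : nat -> 'M[C]_d) (q : 'cV[C]_d)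
  (c : config (n + n).+1 d) : C :=
  let y := [ffun i : 'I_n.+1 => c (inord i)] in
  unamplified B q y *
  (\prod_(1 <= i < n.+1) (if c (inord (n + i)) == c (inord i) then 1 else 0)).

End QuantumDefs.

(* Main.v *)
Require Import Defs.
From HB Require Import structures.
From mathcomp Require Import all_boot all_order all_algebra.
From mathcomp Require Import reals exp.
From mathcomp Require Import complex.
From mathcomp Require Import ring lra zify.
Import Order.TTheory GRing.Theory Num.Theory.
Local Open Scope ring_scope.

Section Spec.
Variable R : realType.
Local Notation C := R[i].

Lemma char_poly_simil N (P M : 'M[C]_N) : P \in unitmx ->
  char_poly (invmx P *m M *m P) = char_poly M.
Proof.
move=> Pu; rewrite /char_poly /char_poly_mx.
have HX : ('X%:M : 'M[{poly C}]_N) = map_mx polyC (invmx P) *m 'X%:M *m map_mx polyC P.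
  by rewrite -mulmxA -scalar_mxC mulmxA -map_mxM mulVmx // map_mx1 mul1mx.
rewrite {1}HX !map_mxM -mulmxBl -mulmxBr !det_mulmx !det_map_mx mulrC mulrA -rmorphM.
by rewrite -det_mulmx mulmxV // det1 rmorph1 mul1r.
Qed.

Lemma spectrum_diag N (P : 'M[C]_N) (D : 'rV[C]_N) : P \in unitmx ->
  perm_eq (spectrum (invmx P *m diag_mx D *m P)) [seq D 0 i | i <- enum 'I_N].
Proof.
move=> Pu; apply: prod_XsubC_eq.
rewrite /spectrum; case: closed_field_poly_normal => s /= Hs.
have: char_poly (invmx P *m diag_mx D *m P) = \prod_(z <- s) ('X - z%:P).
  by rewrite {1}Hs (monicP (char_poly_monic _)) scale1r.
move=> <-; rewrite char_poly_simil // char_poly_trig ?diag_mx_is_trig //.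
by rewrite big_map big_enum /=; apply: eq_bigr => i _; rewrite mxE eqxx mulr1n.
Qed.
End Spec.

Section Jensen.
Variable R : realType.

Lemma tangent_xlnx (l m : R) : 0 <= l -> 0 < m ->
  l * ln m + l - m <= l * ln l.
Proof.
move=> l0 m0; have [->|lp] := eqVneq l 0; first by rewrite !mul0r add0r subr_le0 ltW.
have lg : 0 < l by rewrite lt_def lp.
have h := le_ln1Dx (x := m / l - 1) _.
have : -1 < m / l - 1 by rewrite ltrBrDr addrC subrr divr_gt0.
move/h; rewrite addrC subrK ln_div ?posrE //.
move=> H; have := ler_pM2l lg; move=> /(_ (ln m - ln l) (m / l - 1)); rewrite H.
move=> /esym; rewrite mulrBr mulrBr mulrCA divff ?mulr1 ?mulr1; last exact: lp.
move=> Hb; have {Hb} := esym Hb; move=> /idP Hb; lra.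
Qed.

Lemma jensen_row N (w lam : 'I_N -> R) : (forall k, 0 <= w k) ->
  (forall k, 0 <= lam k) -> \sum_k w k = 1 ->
  (\sum_k w k * lam k) * ln (\sum_k w k * lam k)
    <= \sum_k w k * (lam k * ln (lam k)).
Proof.
move=> w0 l0 w1; set mu := \sum_k w k * lam k.
have mu0 : 0 <= mu by apply: sumr_ge0 => k _; apply: mulr_ge0.
have [mue|mup] := eqVneq mu 0.
  have H := psumr_eq0P (fun k _ => mulr_ge0 (w0 k) (l0 k)) mue.
  rewrite mue mul0r big1 // => k _; rewrite mulrA H //.
  by rewrite mul0r.
have mug : 0 < mu by rewrite lt_def mup.
apply: (@le_trans _ _ (\sum_k w k * (lam k * ln mu + lam k - mu))).
  rewrite (eq_bigr (fun k => (w k * lam k) * ln mu + w k * lam k - w k * mu)); last first.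
    by move=> k _; ring.
  rewrite big_split /= big_split /= -mulr_suml sumrN -mulr_suml w1 mul1r -/mu.
  lra.
apply: ler_sum => k _; apply: ler_wpM2l => //; exact: tangent_xlnx.
Qed.

Lemma jensen N (w : 'I_N -> 'I_N -> R) (lam : 'I_N -> R) :
  (forall j k, 0 <= w j k) -> (forall k, 0 <= lam k) ->
  (forall j, \sum_k w j k = 1) -> (forall k, \sum_j w j k = 1) ->
  \sum_j (\sum_k w j k * lam k) * ln (\sum_k w j k * lam k)
    <= \sum_k lam k * ln (lam k).
Proof.
move=> w0 l0 r1 c1.
apply: (@le_trans _ _ (\sum_j \sum_k w j k * (lam k * ln (lam k)))).
  by apply: ler_sum => j _; apply: jensen_row.
rewrite exchange_big /=; apply: ler_sum => k _ /=.
by rewrite -mulr_suml c1 mul1r.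
Qed.
End Jensen.

Set Implicit Arguments.
Unset Strict Implicit.

Section Spec.
Variable R : realType.
Local Notation C := R[i].
Local Open Scope sesquilinear_scope.

Lemma herm_decomp N (A : 'M[C]_N) : (forall i j, A j i = (A i j)^*) ->
  exists P : 'M[C]_N, exists l : 'rV[C]_N,
   [/\ P *m P^t* = 1%:M, P^t* *m P = 1%:M, A = P^t* *m diag_mx l *m P,
       P \in unitmx & invmx P = P^t* ].
Proof.
move=> hA.
have At : A^t* = A by apply/matrixP => i j; rewrite !mxE hA conjCK.
have An : A \is normalmx by apply/normalmxP; rewrite At.
have Pu := spectral_unitarymx A.
exists (spectralmx A), (spectral_diag A); split.
- exact/unitarymxP.
- exact/mulmx1C/unitarymxP.
- by rewrite -invmx_unitary //; apply/orthomx_spectralP.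
- exact: unitarymx_unit.
- exact: invmx_unitary.
Qed.

Lemma herm_entry N (P : 'M[C]_N) (l : 'rV[C]_N) i j :
  (P^t* *m diag_mx l *m P) i j = \sum_k (P k i)^* * l 0 k * P k j.
Proof. by rewrite mul_mx_diag !mxE; apply: eq_bigr => k _; rewrite !mxE. Qed.

Lemma herm_eig N (P : 'M[C]_N) (l : 'rV[C]_N) k :
  P *m P^t* = 1%:M ->
  l 0 k = \sum_i \sum_j P k i * (P^t* *m diag_mx l *m P) i j * (P k j)^*.
Proof.
move=> PP.
have : P *m (P^t* *m diag_mx l *m P) *m P^t* = diag_mx l.
  by rewrite !mulmxA PP mul1mx -mulmxA PP mulmx1.
move/matrixP/(_ k k); rewrite [diag_mx l k k]mxE eqxx mulr1n => <-.
rewrite [LHS]mxE; under eq_bigr do rewrite mxE mulr_suml.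
rewrite exchange_big /=; apply: eq_bigr => i _; apply: eq_bigr => j _.
by rewrite !mxE.
Qed.

Section W.
Variables (N : nat) (T : finType) (g : 'I_N -> T).

Definition W (P Q : 'M[C]_N) j k :=
  \sum_i \sum_i' (g i == g i')%:R * (Q j i * (P k i)^*) * (Q j i' * (P k i')^*)^*.

Lemma W_ge0 P Q j k : 0 <= W P Q j k.
Proof.
rewrite /W; set h := fun i => Q j i * (P k i)^*.
have -> : \sum_i \sum_i' (g i == g i')%:R * h i * (h i')^* =
          \sum_x (\sum_(i | g i == x) h i) * (\sum_(i | g i == x) h i)^*.
  rewrite (partition_big g xpredT) //=; apply: eq_bigr => x _.
  rewrite rmorph_sum mulr_suml; apply: eq_bigr => i /eqP gi.
  rewrite mulr_sumr [RHS]big_mkcond; apply: eq_bigr => i' _.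
  by rewrite gi eq_sym; case: (g i' == x); rewrite ?mul1r ?mul0r ?mulr0.
by apply: sumr_ge0 => x _; apply: mul_conjC_ge0.
Qed.

Lemma W_sym P Q j k : W P Q j k = W Q P k j.
Proof.
rewrite /W exchange_big; apply: eq_bigr => i _; apply: eq_bigr => i' _.
rewrite eq_sym !rmorphM /= !conjCK; ring.
Qed.

Lemma W_row P Q j : P^t* *m P = 1%:M -> Q *m Q^t* = 1%:M -> \sum_k W P Q j k = 1.
Proof.
move=> PP QQ; rewrite /W exchange_big /=.
have QQj : \sum_i Q j i * (Q j i)^* = 1.
  by move/matrixP: QQ => /(_ j j); rewrite !mxE eqxx mulr1n => <-; apply: eq_bigr => i _; rewrite !mxE.
transitivity (\sum_i Q j i * (Q j i)^*); last exact: QQj.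
apply: eq_bigr => i _; rewrite exchange_big /=.
rewrite (bigD1 i) //= [X in _ + X]big1 ?addr0.
  have : (P^t* *m P) i i = 1 by rewrite PP mxE eqxx.
  rewrite mxE => H.
  transitivity (Q j i * (Q j i)^* * \sum_k (P^t*) i k * P k i); last by rewrite H mulr1.
  rewrite mulr_sumr; apply: eq_bigr => k _.
  rewrite eqxx mulr1n !mxE !rmorphM /= !conjCK; ring.
move=> i' ni'.
have : (P^t* *m P) i i' = 0 by rewrite PP mxE eq_sym (negbTE ni').
rewrite mxE => H.
transitivity ((g i == g i')%:R * Q j i * (Q j i')^* * \sum_k (P^t*) i k * P k i'); last by rewrite H mulr0.
rewrite mulr_sumr; apply: eq_bigr => k _; rewrite !mxE !rmorphM /= !conjCK; ring.
Qed.

Lemma mu_formula (P Q : 'M[C]_N) (l m : 'rV[C]_N) j :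
  Q *m Q^t* = 1%:M ->
  \matrix_(i, i') ((g i == g i')%:R * (P^t* *m diag_mx l *m P) i i') =
    Q^t* *m diag_mx m *m Q ->
  m 0 j = \sum_k W P Q j k * l 0 k.
Proof.
move=> QQ SE; rewrite (@herm_eig _ Q m j QQ) -SE.
rewrite /W; symmetry.
under eq_bigr => k _ do rewrite big_distrl /=.
rewrite exchange_big /=; apply: eq_bigr => i _.
under eq_bigr => k _ do rewrite big_distrl /=.
rewrite exchange_big /=; apply: eq_bigr => i' _.
rewrite mxE herm_entry; symmetry; rewrite mulr_sumr mulr_sumr big_distrl /=; apply: eq_bigr => k _.
rewrite !rmorphM /= !conjCK; ring.
Qed.

End W.

Lemma cRe_add (x y : C) : complex.Re (x + y) = complex.Re x + complex.Re y.
Proof. by case: x => a b; case: y => c e. Qed.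

Lemma cRe_sum (I : Type) (r : seq I) (Pr : pred I) (F : I -> C) :
  complex.Re (\sum_(i <- r | Pr i) F i) = \sum_(i <- r | Pr i) complex.Re (F i).
Proof. exact: (big_morph _ cRe_add). Qed.

Lemma ge0_Im0 (x : C) : 0 <= x -> complex.Im x = 0.
Proof. by rewrite lecE => /andP[/eqP H _]. Qed.

Lemma cRe_ge0 (x : C) : 0 <= x -> 0 <= complex.Re x.
Proof. by rewrite lecE => /andP[_ H]. Qed.

Lemma cRe_mulr_ge0 (x y : C) : 0 <= x -> complex.Re (x * y) = complex.Re x * complex.Re y.
Proof. move=> /ge0_Im0; case: x => a b /= ->; case: y => c e /=; ring. Qed.

Lemma pinch N (T : finType) (g : 'I_N -> T) (A : 'M[C]_N) :
  (forall i j, A j i = (A i j)^*) ->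
  (forall u : 'I_N -> C, 0 <= \sum_i \sum_j u i * A i j * (u j)^*) ->
  \sum_(z <- spectrum (\matrix_(i, j) ((g i == g j)%:R * A i j))) complex.Re z * ln (complex.Re z)
  <= \sum_(z <- spectrum A) complex.Re z * ln (complex.Re z).
Proof.
move=> hA psd.
have [P [l [PP1 PP2 AE Pu PiE]]] := herm_decomp hA.
set S := \matrix_(i, j) _.
have hS : forall i j, S j i = (S i j)^*.
  by move=> i j; rewrite !mxE hA rmorphM /= conjC_nat eq_sym.
have [Q [m [QQ1 QQ2 SE Qu QiE]]] := herm_decomp hS.
have lge0 : forall k, 0 <= l 0 k.
  by move=> k; rewrite (@herm_eig _ P l k PP1) -AE; apply: psd.
have muE : forall j, m 0 j = \sum_k W g P Q j k * l 0 k.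
  by move=> j; apply: mu_formula => //; rewrite -SE /S AE.
rewrite SE AE -QiE -PiE (perm_big _ (@spectrum_diag _ _ Q m Qu)) (perm_big _ (@spectrum_diag _ _ P l Pu)).
rewrite !big_map.
under eq_bigr => j _ do rewrite muE cRe_sum.
under eq_bigr => j _ do under eq_bigr => k _ do rewrite cRe_mulr_ge0 ?W_ge0 //.
apply: (@jensen _ _ (fun j k => complex.Re (W g P Q j k)) (fun k => complex.Re (l 0 k))).
- by move=> j k; apply/cRe_ge0/W_ge0.
- by move=> k; apply/cRe_ge0.
- by move=> j; rewrite -cRe_sum W_row.
- move=> k; under eq_bigr do rewrite W_sym.
  by rewrite -cRe_sum W_row.
Qed.
End Spec.

Section Reduced.
Variable R : realType.
Local Notation C := R[i].
Variables (k d m : nat) (psi : config k d -> C) (p : m.-tuple 'I_k).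
Variable u : config k d -> config m d -> config k d.
Hypothesis hu : forall (a : config k d) (y : config m d) (b : config k d),
  (restr p b == y) && [forall l, (l \notin p) ==> (a l == b l)] = (b == u a y).

Lemma R1 i j : reduced psi p i j =
  \sum_(a | restr p a == enum_val i) psi a * (psi (u a (enum_val j)))^*.
Proof.
rewrite mxE; apply: eq_bigr => a _.
by rewrite (eq_bigl (pred1 (u a (enum_val j)))) ?big_pred1_eq // => b; exact: hu.
Qed.

Lemma u_restr a y : restr p (u a y) = y.
Proof. by move: (hu a y (u a y)); rewrite eqxx => /andP[/eqP]. Qed.

Lemma u_agree a y l : l \notin p -> u a y l = a l.
Proof.
have /andP[_ /forallP H] : (restr p (u a y) == y) && [forall l, (l \notin p) ==> (a l == u a y l)].
  by rewrite hu.
by move=> lp; have /implyP /(_ lp) /eqP := H l.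
Qed.

Lemma u_id a : u a (restr p a) = a.
Proof.
apply/esym/eqP; rewrite -hu eqxx /=; apply/forallP => l; exact/implyP.
Qed.

Lemma u_u e y z : u (u e y) z = u e z.
Proof.
apply/esym/eqP; rewrite -hu u_restr eqxx /=; apply/forallP => l; apply/implyP => lp.
by rewrite !u_agree.
Qed.

Lemma gram i j : #|{: config m d}|%:R * reduced psi p i j =
  \sum_e psi (u e (enum_val i)) * (psi (u e (enum_val j)))^*.
Proof.
set I := enum_val i; set J := enum_val j.
under [RHS]eq_bigr => e _ do rewrite -[u e J](u_u e I).
rewrite (partition_big (fun e => u e I) (fun a => restr p a == I)) /=; last first.
  by move=> e _; rewrite u_restr.
rewrite R1 mulr_sumr; apply: eq_bigr => a /eqP ra.
have -> : \sum_(e | u e I == a) psi (u e I) * (psi (u (u e I) J))^* =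
          \sum_(e | u e I == a) psi a * (psi (u a J))^*.
  by apply: eq_bigr => e /eqP ->.
rewrite (reindex_onto (u a) (restr p)) /=; last first.
  by move=> e /eqP <-; rewrite u_u u_id.
rewrite (eq_bigl xpredT); last first.
  by move=> y; rewrite u_u /I -ra u_id eqxx u_restr eqxx.
by rewrite sumr_const mulr_natl.
Qed.


Lemma red_herm i j : reduced psi p j i = (reduced psi p i j)^*.
Proof.
have Kp : (0 < #|{: config m d}|)%N by move: (ltn_ord i); move: (nat_of_ord i) => x; case: #|_|.
have K0 : (#|{: config m d}|%:R : C) != 0 by rewrite pnatr_eq0 -lt0n.
apply: (mulfI K0); rewrite gram -[#|_|%:R](conjC_nat) -rmorphM gram rmorph_sum.
by apply: eq_bigr => e _; rewrite rmorphM /= conjCK mulrC.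
Qed.

Lemma red_psd (v : 'I_#|{: config m d}| -> C) :
  0 <= \sum_i \sum_j v i * reduced psi p i j * (v j)^*.
Proof.
have [K0|Kp] := posnP #|{: config m d}|.
  rewrite big1 // => i _; exfalso; move: (ltn_ord i); move: (nat_of_ord i) => x.
  by rewrite K0.
have Kp' : (0 : C) < #|{: config m d}|%:R by rewrite ltr0n.
rewrite -(pmulr_rge0 _ Kp') mulr_sumr.
have -> : \sum_i #|{: config m d}|%:R * (\sum_j v i * reduced psi p i j * (v j)^*) =
  \sum_e (\sum_i v i * psi (u e (enum_val i))) * (\sum_j v j * psi (u e (enum_val j)))^*.
  symmetry; under eq_bigr => e _ do rewrite rmorph_sum big_distrl /=.
  rewrite exchange_big /=; apply: eq_bigr => i _.
  under eq_bigr => e _ do rewrite big_distrr /=.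
  rewrite exchange_big /= mulr_sumr; apply: eq_bigr => j _.
  rewrite [RHS](_ : _ = v i * (#|{: config m d}|%:R * reduced psi p i j) * (v j)^*); last by ring.
  rewrite gram mulr_sumr big_distrl /=.
  apply: eq_bigr => e _; rewrite rmorphM /=; ring.
by apply: sumr_ge0 => e _; apply: mul_conjC_ge0.
Qed.
End Reduced.

Definition setv k d (a : config k d) (x : 'I_k) (v : 'I_d) : config k d :=
  [ffun l => if l == x then v else a l].

Definition upd1 k d (x : 'I_k) (a : config k d) (y : config 1 d) : config k d :=
  setv a x (y ord0).

Definition upd2 k d (x z : 'I_k) (a : config k d) (y : config 2 d) : config k d :=
  setv (setv a z (y ord_max)) x (y ord0).

Lemma restr1E k d (x : 'I_k) (b : config k d) (y : config 1 d) :
  (restr [tuple x] b == y) = (b x == y ord0).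
Proof.
apply/eqP/eqP => [<-|H]; first by rewrite ffunE (tnth_nth x).
by apply/ffunP => j; rewrite ffunE (ord1 j) (tnth_nth x) H.
Qed.

Lemma restr2E k d (x z : 'I_k) (b : config k d) (y : config 2 d) :
  (restr [tuple x; z] b == y) = (b x == y ord0) && (b z == y ord_max).
Proof.
apply/eqP/andP => [<-|[/eqP H1 /eqP H2]]; first by rewrite !ffunE !(tnth_nth x).
apply/ffunP => j; rewrite ffunE (tnth_nth x).
by case: j => [[|[|//]]] Hj /=; [rewrite H1 | rewrite H2]; congr (y _); apply: val_inj.
Qed.

Lemma hu1 k d (x : 'I_k) (a : config k d) (y : config 1 d) (b : config k d) :
  (restr [tuple x] b == y) && [forall l, (l \notin [tuple x]) ==> (a l == b l)] =
  (b == upd1 x a y).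
Proof.
rewrite restr1E; apply/andP/eqP => [[/eqP H1 /forallP H]|->].
  apply/ffunP => l; rewrite ffunE; case: eqP => [->|/eqP lx] //.
  have /implyP := H l; rewrite inE (negbTE lx) => /(_ isT) /eqP //.
rewrite /upd1 ffunE eqxx; split => //; apply/forallP => l; apply/implyP.
by rewrite inE ffunE => /negbTE ->.
Qed.

Lemma hu2 k d (x z : 'I_k) (a : config k d) (y : config 2 d) (b : config k d) :
  x != z ->
  (restr [tuple x; z] b == y) && [forall l, (l \notin [tuple x; z]) ==> (a l == b l)] =
  (b == upd2 x z a y).
Proof.
move=> xz; rewrite restr2E; apply/andP/eqP => [[/andP[/eqP H1 /eqP H2] /forallP H]|->].
  apply/ffunP => l; rewrite !ffunE; case: eqP => [->|/eqP lx] //.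
  case: eqP => [->|/eqP lz] //.
  have /implyP := H l; rewrite !inE (negbTE lx) (negbTE lz) => /(_ isT) /eqP //.
rewrite /upd2 !ffunE eqxx [z == x]eq_sym (negbTE xz) !eqxx; split => //; apply/forallP => l; apply/implyP.
by rewrite !inE !ffunE negb_or => /andP[/negbTE -> /negbTE ->].
Qed.

Lemma setv_id k d (a : config k d) x : setv a x (a x) = a.
Proof. by apply/ffunP => l; rewrite ffunE; case: eqP => // ->. Qed.

Lemma setv_setv k d (a : config k d) x v w : setv (setv a x v) x w = setv a x w.
Proof. by apply/ffunP => l; rewrite !ffunE; case: eqP. Qed.

Lemma setvC k d (a : config k d) x z v w : x != z ->
  setv (setv a z w) x v = setv (setv a x v) z w.
Proof.
move=> xz; apply/ffunP => l; rewrite !ffunE; case: eqP => [->|//].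
by rewrite (negbTE xz).
Qed.

Lemma setv_eq k d (a : config k d) x v : (setv a x v == a) = (v == a x).
Proof.
apply/eqP/eqP => [<-|->]; last exact: setv_id.
by rewrite ffunE eqxx.
Qed.

Lemma setvE k d (a : config k d) x v l : setv a x v l = if l == x then v else a l.
Proof. by rewrite ffunE. Qed.

Section Amp.
Variable R : realType.
Local Notation C := R[i].
Variables (d n : nat).
Hypothesis hn : (0 < n)%N.

Definition yc (c : config (n + n).+1 d) : config n.+1 d := [ffun i : 'I_n.+1 => c (inord i)].
Definition ext (y : config n.+1 d) : config (n + n).+1 d :=
  [ffun l : 'I_(n + n).+1 => y (inord (if (l <= n)%N then val l else (l - n)%N))].
Definition delta (c : config (n + n).+1 d) : C :=
  \prod_(1 <= i < n.+1) (if c (inord (n + i)) == c (inord i) then 1 else 0).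

Lemma inordK' m (i : nat) : (i < m.+1)%N -> (@inord m i : nat) = i.
Proof. exact: inordK. Qed.

Lemma yc_ext y : yc (ext y) = y.
Proof.
apply/ffunP => i; rewrite !ffunE /= inordK'; last by have := ltn_ord i; lia.
by rewrite (leq_ord i) inord_val.
Qed.

Lemma prod_if (I : Type) (r : seq I) (b : pred I) :
  \prod_(i <- r) (if b i then 1 else 0 : C) = (all b r)%:R.
Proof.
elim: r => [|x r IH]; first by rewrite big_nil.
by rewrite big_cons IH /=; case: (b x); rewrite ?mul1r ?mul0r.
Qed.

Lemma delta_eq c : delta c = (c == ext (yc c))%:R.
Proof.
rewrite /delta prod_if; congr ((nat_of_bool _)%:R).
apply/allP/eqP => [H|E].
  apply/ffunP => l; rewrite !ffunE /=; case: ifP => ln.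
    by congr (c _); apply: val_inj; rewrite /= !inordK' //; have := ltn_ord l; lia.
  have := H (l - n)%N; rewrite mem_index_iota /=.
  have -> : (1 <= l - n < n.+1)%N by have := ltn_ord l; lia.
  have e1 : (inord (n + (l - n)) : 'I_(n+n).+1) = l.
    by apply: val_inj; rewrite /= inordK'; have := ltn_ord l; lia.
  have e2 : (inord (inord (l - n) : 'I_n.+1) : 'I_(n+n).+1) = inord (l - n).
    by apply: val_inj; rewrite /= !inordK'; have := ltn_ord l; lia.
  by rewrite e1 e2 => /(_ isT) /eqP ->.
move=> i; rewrite mem_index_iota /= => Hi.
rewrite E !ffunE /= (@inordK' (n + n) (n + i)); last lia.
rewrite (@inordK' (n + n) i); last lia.
have h1 : (n + i <= n)%N = false by lia.
have h2 : (i <= n)%N = true by lia.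
by rewrite h1 h2 addKn.
Qed.


Lemma delta_ext y : delta (ext y) = 1.
Proof. by rewrite delta_eq yc_ext eqxx. Qed.

Lemma sum_amp (G : config (n + n).+1 d -> C) :
  \sum_c delta c * G c = \sum_y G (ext y).
Proof.
rewrite (bigID (fun c => c == ext (yc c))) /= [X in _ + X]big1 ?addr0; last first.
  by move=> c /negbTE H; rewrite delta_eq H mul0r.
under eq_bigr => c /eqP H do rewrite delta_eq H yc_ext eqxx mul1r -H.
rewrite (reindex_onto ext yc) /=; last by move=> c /eqP <-.
by apply: eq_bigl => y; rewrite yc_ext !eqxx.
Qed.

Definition x0 : 'I_(n + n).+1 := inord 0.
Definition y0 : 'I_n.+1 := inord 0.
Definition x2n : 'I_(n + n).+1 := inord (n + n).
Definition yn : 'I_n.+1 := inord n.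

Lemma x0_x2n : x0 != x2n.
Proof. by apply/eqP => /(congr1 val); rewrite /= !inordK'; lia. Qed.

Lemma y0_yn : y0 != yn.
Proof. by apply/eqP => /(congr1 val); rewrite /= !inordK'; lia. Qed.

Lemma ext_x0 y : ext y x0 = y y0.
Proof. by rewrite ffunE /x0 /y0 /= inordK'. Qed.

Lemma ext_x2n y : ext y x2n = y yn.
Proof.
rewrite ffunE /x2n /yn inordK' ?ifN; try lia.
by rewrite addKn.
Qed.

Lemma setv_ext0 y v : setv (ext y) x0 v = ext (setv y y0 v).
Proof.
apply/ffunP => l; rewrite !ffunE.
have [->|lx] := eqVneq l x0; first by rewrite /x0 /= inordK' // leq0n /y0 eqxx.
have l0 : (0 < l)%N.
  by move: lx; rewrite lt0n; apply: contra => /eqP l0; apply/eqP/val_inj; rewrite /= inordK'.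
have := ltn_ord l => lt.
by case: ifP => Hl; rewrite ifN //; apply/eqP => /(congr1 val); rewrite /y0 /= !inordK'; lia.
Qed.

Lemma yc_setv2n c v : yc (setv c x2n v) = yc c.
Proof.
apply/ffunP => i; rewrite !ffunE ifN //; apply/eqP => /(congr1 val).
by rewrite /x2n /= !inordK'; have := ltn_ord i; lia.
Qed.

Variables (B : nat -> 'M[C]_d) (q : 'cV[C]_d).

Lemma ampE c : amplified B q c = unamplified B q (yc c) * delta c.
Proof. by []. Qed.

Lemma amp_ext y : amplified B q (ext y) = unamplified B q y.
Proof. by rewrite ampE yc_ext delta_ext mulr1. Qed.

Lemma amp_setv2n y v :
  amplified B q (setv (ext y) x2n v) = unamplified B q y * (v == y yn)%:R.
Proof.
by rewrite ampE delta_eq !yc_setv2n yc_ext setv_eq ext_x2n.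
Qed.

Lemma amp_sum (P : pred (config (n + n).+1 d)) (F : config (n + n).+1 d -> config (n + n).+1 d) :
  \sum_(c | P c) amplified B q c * (amplified B q (F c))^* =
  \sum_y (P (ext y))%:R * (unamplified B q y * (amplified B q (F (ext y)))^*).
Proof.
rewrite big_mkcond /=.
rewrite (eq_bigr (fun c => delta c * ((P c)%:R * (unamplified B q (yc c) * (amplified B q (F c))^*)))); last first.
  by move=> c _; rewrite ampE; case: (P c); rewrite ?mul1r ?mul0r ?mulr0 // mulrCA mulrA.
by rewrite sum_amp; apply: eq_bigr => y _; rewrite yc_ext.
Qed.

End Amp.

Section Unamp.
Variable R : realType.
Local Notation C := R[i].
Variables (d n : nat).
Hypothesis hn : (0 < n)%N.
Variables (B : nat -> 'M[C]_d) (q : 'cV[C]_d).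

Definition alpha (y : config n.+1 d) : C :=
  (\sum_(j < d) (B 1%N j (y (inord 1)))^* * q j 0) *
  (\prod_(2 <= i < n.+1) \sum_(j < d) (B i j (y (inord i)))^* * B i.-1 j (y (inord i.-1))).

Lemma unampE y : unamplified B q y = alpha y * B n (y (y0 n)) (y (yn n)).
Proof. by []. Qed.

Lemma setv_ne (y : config n.+1 d) (t : 'I_d) (i : nat) : (0 < i <= n)%N -> setv y (y0 n) t (inord i) = y (inord i).
Proof.
move=> Hi; rewrite ffunE ifN //; apply/eqP => /(congr1 val).
by rewrite /y0 /= !inordK'; lia.
Qed.

Lemma alpha_setv0 (y : config n.+1 d) (t : 'I_d) : alpha (setv y (y0 n) t) = alpha y.
Proof.
rewrite /alpha setv_ne; last lia.
congr (_ * _); apply: eq_big_nat => i Hi.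
by apply: eq_bigr => j _; rewrite !setv_ne //; lia.
Qed.

Lemma sum_out0 (H : config n.+1 d -> C) (z : 'I_d) :
  \sum_y H y = \sum_(y : config n.+1 d | y (y0 n) == z) \sum_t H (setv y (y0 n) t).
Proof.
rewrite (partition_big (fun y : config n.+1 d => y (y0 n)) xpredT) //= exchange_big /=.
apply: eq_bigr => t _.
rewrite (reindex_onto (fun y : config n.+1 d => setv y (y0 n) t) (fun y : config n.+1 d => setv y (y0 n) z)) /=; last first.
  by move=> y /eqP <-; rewrite setv_setv setv_id.
apply: eq_bigl => y; rewrite setv_setv ffunE eqxx /= setv_eq.
by rewrite eqxx eq_sym.
Qed.

Lemma unit_col (U : 'M[C]_d) : unitary U -> forall a b,
  \sum_t U t a * (U t b)^* = (b == a)%:R.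
Proof.
move=> hU a b; move/matrixP: hU => /(_ b a); rewrite !mxE => <-.
by apply: eq_bigr => t _; rewrite !mxE mulrC.
Qed.


Lemma setv0_yn (y : config n.+1 d) t : setv y (y0 n) t (yn n) = y (yn n).
Proof. by rewrite ffunE ifN // eq_sym y0_yn. Qed.

Lemma setv0_y0 (y : config n.+1 d) t : setv y (y0 n) t (y0 n) = t.
Proof. by rewrite ffunE eqxx. Qed.

Lemma core2 (I0 J0 : 'I_d) : unitary (B n) ->
  \sum_(y : config n.+1 d) (y (yn n) == I0)%:R * (unamplified B q y * (unamplified B q y * (J0 == y (yn n))%:R)^*) =
  \sum_(y : config n.+1 d) (y (yn n) == I0)%:R * (unamplified B q y * (unamplified B q (setv y (yn n) J0))^*).
Proof.
move=> hU; rewrite !(sum_out0 _ I0); apply: eq_bigr => y _.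
set a := y (yn n).
transitivity ((a == I0)%:R * (J0 == a)%:R * (alpha y * (alpha y)^*) *
               \sum_t B n t a * (B n t a)^*).
  rewrite mulr_sumr; apply: eq_bigr => t _.
  rewrite unampE alpha_setv0 setv0_yn setv0_y0 -/a !rmorphM /= conjC_nat; ring.
transitivity ((a == I0)%:R * (alpha y * (alpha (setv y (yn n) J0))^*) *
               \sum_t B n t a * (B n t J0)^*); last first.
  rewrite mulr_sumr; apply: eq_bigr => t _.
  rewrite !unampE setvC; last by rewrite eq_sym y0_yn.
  rewrite !alpha_setv0 !setv0_yn !setv0_y0 -/a ffunE eqxx !rmorphM /=; ring.
rewrite !unit_col // eqxx mulr1.
have [->|ne] := eqVneq J0 a; first by rewrite /a setv_id /= mulr1 mulr1.
by rewrite /= !mulr0 mul0r.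
Qed.

End Unamp.

Section R12.
Variable R : realType.
Local Notation C := R[i].

Lemma R1_1 k d (psi : config k d -> C) (x : 'I_k) i j :
  reduced psi [tuple x] i j =
  \sum_(a : config k d | a x == enum_val i ord0) psi a * (psi (setv a x (enum_val j ord0)))^*.
Proof. by rewrite (R1 psi (hu1 x)); apply: eq_bigl => a; rewrite restr1E. Qed.

Lemma R1_2 k d (psi : config k d -> C) (x z : 'I_k) i j : x != z ->
  reduced psi [tuple x; z] i j =
  \sum_(a : config k d | (a x == enum_val i ord0) && (a z == enum_val i ord_max))
     psi a * (psi (setv (setv a z (enum_val j ord_max)) x (enum_val j ord0)))^*.
Proof.
by move=> xz; rewrite (R1 psi (fun a y b => hu2 a y b xz)); apply: eq_bigl => a; rewrite restr2E.
Qed.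
End R12.

Section E.
Variable R : realType.
Local Notation C := R[i].
Variables (d n : nat).
Hypothesis hn : (0 < n)%N.
Variables (B : nat -> 'M[C]_d) (q : 'cV[C]_d).

Lemma E1 : reduced (amplified B q) [tuple x0 n] = reduced (unamplified B q) [tuple y0 n].
Proof.
apply/matrixP => i j; rewrite !R1_1 amp_sum // [RHS]big_mkcond /=.
apply: eq_bigr => y _; rewrite ext_x0 // setv_ext0 // amp_ext //.
by case: eqP; rewrite ?mul1r ?mul0r.
Qed.

Lemma E2 : unitary (B n) ->
  reduced (amplified B q) [tuple x2n n] = reduced (unamplified B q) [tuple yn n].
Proof.
move=> hU; apply/matrixP => i j; rewrite !R1_1 amp_sum // [RHS]big_mkcond /=.
rewrite (eq_bigr (fun y : config n.+1 d => (y (yn n) == enum_val i ord0)%:R * (unamplified B q y *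
   (unamplified B q y * (enum_val j ord0 == y (yn n))%:R)^*))); last first.
  by move=> y _; rewrite ext_x2n // amp_setv2n.
rewrite core2 //; apply: eq_bigr => y _.
by case: eqP; rewrite ?mul1r ?mul0r.
Qed.

Lemma E3 :
  reduced (amplified B q) [tuple x0 n; x2n n] =
  \matrix_(i < #|{: config 2 d}|, j < #|{: config 2 d}|) (((enum_val i : config 2 d) ord_max == (enum_val j : config 2 d) ord_max)%:R *
                  reduced (unamplified B q) [tuple y0 n; yn n] i j).
Proof.
apply/matrixP => i j; rewrite R1_2 ?x0_x2n // mxE R1_2 ?y0_yn // amp_sum //.
rewrite mulr_sumr [RHS]big_mkcond /=; apply: eq_bigr => y _.
rewrite setvC ?x0_x2n // setv_ext0 // amp_setv2n // setv0_yn // ext_x0 // ext_x2n //.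
set I0 := enum_val i ord0; set I1 := enum_val i ord_max.
set J0 := enum_val j ord0; set J1 := enum_val j ord_max.
case: (y (y0 n) == I0); rewrite /= ?mul0r ?mulr0 //.
have [E|ne] := eqVneq (y (yn n)) I1; last by rewrite /= mul0r.
rewrite E /= mul1r; have [<-|ne'] := eqVneq I1 J1.
  rewrite (_ : setv y (yn n) I1 = y); last by rewrite -E setv_id.
  by rewrite /= !mulr1 mul1r.
by rewrite /= mulr0 rmorph0 mulr0 mul0r.
Qed.
End E.


Lemma final_ineq (R : realType) (d n : nat) (hn : (0 < n)%N)
  (B : nat -> 'M[R[i]]_d) (q : 'cV[R[i]]_d) :
  vN_entropy d (reduced (@unamplified R d n B q) [tuple y0 n; yn n]) <=
  vN_entropy d (reduced (@amplified R d n B q) [tuple x0 n; x2n n]).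
Proof.
rewrite (E3 hn B q) /vN_entropy lerN2 -!big_distrl /=; apply: ler_wpM2r.
  rewrite invr_ge0; have [->|dp] := posnP d; first by rewrite ln0.
  by apply: ln_ge0; rewrite ler1n.
apply: (pinch (fun i : 'I_#|{: config 2 d}| => (enum_val i : config 2 d) ord_max)).
- exact: (red_herm _ (fun a y b => hu2 a y b (y0_yn hn))).
- exact: (red_psd _ (fun a y b => hu2 a y b (y0_yn hn))).
Qed.


Unset Implicit Arguments.
Set Strict Implicit.

Theorem theorem4 (R : realType) (d n : nat) (hn : (0 < n)%N)
  (B : nat -> 'M[R[i]]_d) (q : 'cV[R[i]]_d)
  (hB : forall i : nat, (1 <= i <= n)%N -> unitary (B i))
  (hq : \sum_(j < d) q j 0 * (q j 0)^* = 1) :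
  mutual_entropy (@amplified R d n B q) (inord 0) (inord (n + n))
  <= mutual_entropy (@unamplified R d n B q) (inord 0) (inord n).
Proof.
have hBn : unitary (B n) by apply: hB; rewrite hn leqnn.
have e1 := E1 hn B q; have e2 := E2 hn q hBn.
rewrite /x0 /y0 /x2n /yn in e1 e2.
rewrite /mutual_entropy /ent e1 e2 lerD2l lerN2.
exact: final_ineq.
Qed.
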